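(* Let $k\ge1$ and $\mathbf m=(m_0,\dots,m_{2k})\in\mathbb Z^{2k+1}$. Then $$P_{2k-1}(x,\mathbf m)=x^{k-1}\sum_{j=0}^{k}\Big(\sum_{A\in I(2k-1,2j-1)}\prod_{i\in A}m_i\Big)x^j$$ and $$P_{2k}(x,\mathbf m)=x^{k}\sum_{j=0}^{k}\Big(\sum_{A\in I(2k,2j)}\prod_{i\in A}m_i\Big)x^j.$$
   Context: For $\mathbf m=(m_0,\dots,m_K)\in\mathbb Z^{K+1}$ the polynomials $P_\ell(x,\mathbf m),Q_\ell(x,\mathbf m)\in\mathbb Z[x]$, $0\le\ell\le K$, are defined by $P_0(x,\mathbf m)=m_0$, $Q_0(x,\mathbf m)=1$ and, for $1\le\ell\le K$, $P_\ell(x,\mathbf m)=m_\ell\,x\,P_{\ell-1}(x,\mathbf m)+Q_{\ell-1}(x,\mathbf m)$, $Q_\ell(x,\mathbf m)=x\,P_{\ell-1}(x,\mathbf m)$. For integers $h\ge0$ and $j\ge-1$, $I(h,j)$ denotes the set of subsets $\{a_0,\dots,a_j\}$ of $\{0,\dots,h\}$ (with $j+1$ elements) such that $a_0<\dots<a_j$ and $a_i\equiv i\pmod 2$ for every $i=0,\dots,j$; in particular $I(h,-1)=\{\emptyset\}$, and the empty product equals $1$. *)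

(* Defs.v *)
From mathcomp Require Import all_boot all_order all_algebra.
Set Implicit Arguments. Unset Strict Implicit. Unset Printing Implicit Defensive.
Import GRing.Theory.
Local Open Scope ring_scope.

Fixpoint PQ (m : seq int) (l : nat) : {poly int} * {poly int} :=
  match l with
  | 0%N => ((m`_0)%:P, 1)
  | l'.+1 => let: (p, q) := PQ m l' in
             ((m`_l)%:P * 'X * p + q, 'X * p)
  end.

Definition P (l : nat) (m : seq int) : {poly int} := (PQ m l).1.
Definition Q (l : nat) (m : seq int) : {poly int} := (PQ m l).2.

(* Iset h n = I(h, n-1): the subsets {a_0 < ... < a_(n-1)} of {0,...,h}
   with exactly n elements and a_i = i (mod 2) for every i. *)
Definition Iset (h n : nat) : {set {set 'I_h.+1}} :=
  [set A : {set 'I_h.+1} | (#|A| == n) &&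
     (let s := sort leq [seq val x | x <- enum A] in
      all (fun i => odd (nth 0%N s i) == odd i) (iota 0 n))].

(* Main.v *)
Require Import Defs.
From mathcomp Require Import ring.
From mathcomp Require Import all_boot all_order all_algebra.
Import GRing.Theory.
Local Open Scope ring_scope. Local Open Scope nat_scope. Local Open Scope ring_scope.
Set Implicit Arguments. Unset Strict Implicit. Unset Printing Implicit Defensive.

Definition sA N (A : {set 'I_N}) : seq nat := sort leq [seq val x | x <- enum A].

Lemma sA_sorted N (A : {set 'I_N}) : sorted ltn (sA A).
Proof.
rewrite ltn_sorted_uniq_leq sort_uniq sort_sorted ?andbT; last exact: leq_total.
by rewrite map_inj_uniq ?enum_uniq //; apply: val_inj.
Qed.

Lemma mem_sA N (A : {set 'I_N}) x : (x \in sA A) = (x \in [seq val x | x <- enum A]).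
Proof. by rewrite mem_sort. Qed.

Lemma lift_maxv N (z : 'I_N) : val (lift (@ord_max N) z) = val z.
Proof. by rewrite /= /bump leqNgt ltn_ord. Qed.

Lemma lift_neq_max N (i : 'I_N) : (lift ord_max i == ord_max :> 'I_N.+1) = false.
Proof. by apply/negbTE; rewrite -val_eqE /= /bump leqNgt ltn_ord /= neq_ltn ltn_ord. Qed.

Lemma lift_neq n (h : 'I_n) i : (lift h i == h) = false.
Proof. by apply/negbTE; rewrite eq_sym neq_lift. Qed.

Definition liftS N (B : {set 'I_N}) : {set 'I_N.+1} := [set lift ord_max i | i in B].

Lemma mem_liftS N (B : {set 'I_N}) x :
  (x \in [seq val y | y <- enum (liftS B)]) = (x \in [seq val y | y <- enum B]).
Proof.
apply/mapP/mapP => [[y]|[y]]; rewrite mem_enum.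
  by case/imsetP => z zB -> ->; exists z; rewrite ?mem_enum // lift_maxv.
by move=> yB ->; exists (lift ord_max y); rewrite ?mem_enum ?lift_maxv //; apply: imset_f.
Qed.

Lemma sA_liftS N (B : {set 'I_N}) : sA (liftS B) = sA B.
Proof.
apply: (irr_sorted_eq ltn_trans ltnn); rewrite ?sA_sorted // => x.
by rewrite !mem_sA mem_liftS.
Qed.

Lemma sA_lt N (A : {set 'I_N}) x : x \in sA A -> (x < N)%N.
Proof. by rewrite mem_sA => /mapP [y _ ->]; apply: ltn_ord. Qed.

Lemma sA_liftS_max N (B : {set 'I_N}) : sA (ord_max |: liftS B) = rcons (sA B) N.
Proof.
apply: (irr_sorted_eq ltn_trans ltnn); rewrite ?sA_sorted //.
  have := sA_lt (A := B); have := sA_sorted B.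
  case: (sA B) => //= x p Hp Hlt; rewrite rcons_path Hp /=.
  by apply: Hlt; rewrite mem_last.
move=> x; rewrite mem_sA mem_rcons in_cons mem_sA.
apply/mapP/idP => [[y]|].
  rewrite mem_enum in_setU1 => /orP [/eqP -> ->|yB ->]; first by rewrite eqxx.
  by rewrite -mem_liftS (map_f val) ?orbT // mem_enum.
case/orP => [/eqP ->|]; first by exists ord_max; rewrite // mem_enum setU11.
rewrite -mem_liftS => /mapP [y yB ->].
by exists y => //; rewrite mem_enum setU1r // -mem_enum.
Qed.

Definition W N (F : seq nat -> int) := \sum_(A : {set 'I_N}) F (sA A).

Lemma W0 F : W 0 F = F [::].
Proof.
rewrite /W (big_pred1 set0) => [|A]; last first.
  by apply/esym/eqP/setP => -[].
by rewrite /sA enum_set0.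
Qed.

Lemma WS N F : W N.+1 F = W N F + W N (fun s => F (rcons s N)).
Proof.
rewrite /W addrC.
pose h (p : {set 'I_N} * bool) : {set 'I_N.+1} :=
  if p.2 then ord_max |: liftS p.1 else liftS p.1.
pose g (A : {set 'I_N.+1}) : {set 'I_N} * bool :=
  ([set i | lift ord_max i \in A], ord_max \in A).
have hK : cancel h g.
  case=> B b; rewrite /g /h; congr pair.
    apply/setP => i; rewrite inE; case: b => /=; rewrite ?in_setU1;
     rewrite ?(mem_imset _ _ (@lift_inj _ ord_max)) //.
    by rewrite lift_neq_max.
  case: b => /=; first by rewrite setU11.
  apply/negbTE/imsetP => -[i _] /(congr1 val).
  by rewrite lift_maxv /= => E; have := ltn_ord i; rewrite -E ltnn.
have gK : cancel g h.
  move=> A; rewrite /g /h /=; apply/setP => x.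
  case: (unliftP ord_max x) => [j ->|->].
    case: ifP => _; rewrite ?in_setU1 ?lift_neq /=;
    by rewrite (mem_imset _ _ (@lift_inj _ ord_max)) inE.
  case H: (ord_max \in A); first by rewrite /= setU11.
  apply/negbTE/imsetP => -[i _] /(congr1 val).
  by rewrite lift_maxv /= => E; have := ltn_ord i; rewrite -E ltnn.
rewrite (reindex h) /=; last by exists g => ? _; [apply: hK | apply: gK].
rewrite -(pair_big xpredT xpredT (fun B b => F (sA (h (B, b))))) /=.
rewrite -big_split /=; apply: eq_bigr => B _; rewrite big_bool /h /=.
by rewrite sA_liftS_max sA_liftS.
Qed.

Definition Cn (s : seq nat) n :=
  (size s == n) && all (fun i => odd (nth 0%N s i) == odd i) (iota 0 n).

Lemma Cn_nil n : Cn [::] n = (n == 0)%N.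
Proof. by case: n. Qed.

Lemma Cn_rcons0 s N : Cn (rcons s N) 0 = false.
Proof. by rewrite /Cn size_rcons. Qed.

Lemma Cn_rcons s N n : Cn (rcons s N) n.+1 = Cn s n && (odd N == odd n).
Proof.
rewrite /Cn size_rcons eqSS -addn1 iotaD all_cat /= andbT add0n.
case: eqP => //= Hs; rewrite nth_rcons Hs ltnn eqxx; congr andb.
apply: eq_in_all => i; rewrite mem_iota add0n => /andP [_ Hi].
by rewrite nth_rcons Hs Hi.
Qed.

Definition c (m : seq int) N n :=
  W N (fun s => if Cn s n then \prod_(i <- s) m`_i else 0).

Lemma c0 m n : c m 0 n = (n == 0)%N%:R.
Proof. by rewrite /c W0 Cn_nil big_nil; case: n. Qed.

Lemma cS0 m N : c m N.+1 0 = c m N 0.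
Proof.
rewrite /c WS [X in _ + X]big1 ?addr0 // => A _.
by rewrite Cn_rcons0.
Qed.

Lemma cN0 m N : c m N 0 = 1.
Proof. by elim: N => [|N IH]; rewrite ?c0 ?cS0. Qed.

Lemma cSS m N n : c m N.+1 n.+1 =
  c m N n.+1 + (if odd N == odd n then m`_N * c m N n else 0).
Proof.
rewrite /c WS; congr (_ + _); rewrite /W.
case: ifP => par.
  rewrite big_distrr /=; apply: eq_bigr => A _; rewrite Cn_rcons par andbT.
  by case: ifP; rewrite ?mulr0 // big_rcons /= mulrC.
by apply: big1 => A _; rewrite Cn_rcons par andbF.
Qed.

Lemma cvanish m N n : (N < n)%N -> c m N n = 0.
Proof.
elim: N n => [|N IH] [|n] //; first by rewrite c0.
by move=> H; rewrite cSS !IH // ?mulr0 ?addr0 ?if_same // ltnW.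
Qed.

Lemma Iset_c m h n :
  \sum_(A in Iset h n) \prod_(i in A) m`_(val i) = c m h.+1 n.
Proof.
rewrite /c /W big_mkcond; apply: eq_bigr => A _.
have -> : (A \in Iset h n) = Cn (sA A) n.
  by rewrite inE /Cn /sA size_sort size_map -cardE.
case: ifP => // _.
rewrite [RHS](perm_big [seq val x | x <- enum A]); last by rewrite perm_sort.
by rewrite big_map big_enum.
Qed.

Lemma PS l m : P l.+1 m = (m`_l.+1)%:P * 'X * P l m + Q l m.
Proof. by rewrite /P /Q /=; case: (PQ m l). Qed.

Lemma QS l m : Q l.+1 m = 'X * P l m.
Proof. by rewrite /P /Q /=; case: (PQ m l). Qed.

Definition Ap m k : {poly int} := \poly_(j < k.+1) c m (2 * k)%N (2 * j)%N.
Definition Bp m k : {poly int} := \poly_(j < k.+1) c m (2 * k)%N.+1 (2 * j)%N.+1.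

Lemma coefA m k i : (Ap m k)`_i = c m (2 * k)%N (2 * i)%N.
Proof.
rewrite coef_poly; case: ltnP => // H; rewrite cvanish //.
by rewrite ltn_mul2l /=.
Qed.

Lemma coefB m k i : (Bp m k)`_i = c m (2 * k)%N.+1 (2 * i)%N.+1.
Proof.
rewrite coef_poly; case: ltnP => // H; rewrite cvanish //.
by rewrite ltnS ltn_mul2l /=.
Qed.

Lemma oddD2 k : odd (2 * k)%N = false.
Proof. by rewrite oddM. Qed.

Lemma Ap_step m k : Ap m k.+1 = Ap m k + (m`_(2 * k)%N.+1)%:P * 'X * Bp m k.
Proof.
apply/polyP => i; rewrite coefD -mulrA coefCM coefXM !coefA.
case: i => [|i]; first by rewrite !cN0 mulr0 addr0.
rewrite coefB (mulnS 2 k) (mulnS 2 i) !add2n.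
rewrite (cSS m (2 * k).+1 (2 * i).+1) (cSS m (2 * k) (2 * i).+1) !oddS !oddD2 /=.
by rewrite addr0.
Qed.

Lemma Bp_step m k : Bp m k.+1 = Bp m k + (m`_(2 * k)%N.+2)%:P * Ap m k.+1.
Proof.
apply/polyP => i; rewrite coefD coefCM !coefB coefA (mulnS 2 k) add2n.
rewrite (cSS m (2 * k).+2 (2 * i)) (cSS m (2 * k).+1 (2 * i)) !oddS !oddD2 /=.
by rewrite addr0.
Qed.

Lemma main m k : Q (2 * k)%N m = 'X^k * Ap m k /\ P (2 * k)%N m = 'X^k * Bp m k.
Proof.
elim: k => [|k [IHQ IHP]].
  split; apply/polyP => i.
    by rewrite mul1r coefA /Q /= coef1 c0; case: i.
  rewrite mul1r coefB /P /= coefC; case: i => [|i].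
    by rewrite cSS c0 cN0 mulr1 add0r.
  by rewrite cvanish.
have P1 : P (2 * k)%N.+1 m = 'X^k * Ap m k.+1.
  by rewrite PS IHQ IHP Ap_step; ring.
rewrite mulnS add2n QS P1 PS P1 QS IHP Bp_step exprS; split; ring.
Qed.

Lemma final_aux k (m : seq int) : (1 <= k)%N ->
  P (2 * k)%N.-1 m = 'X^(k.-1) * \sum_(j < k.+1)
     (\sum_(A in Iset (2 * k)%N.-1 (2 * j)%N) \prod_(i in A) m`_(val i))%:P * 'X^j
  /\ P (2 * k)%N m = 'X^k * \sum_(j < k.+1)
     (\sum_(A in Iset (2 * k)%N (2 * j)%N.+1) \prod_(i in A) m`_(val i))%:P * 'X^j.
Proof.
case: k => [|k] // _.
have [_ HP] := main m k.+1.
have [HQ HP0] := main m k.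
have E : ((2 * k.+1).-1 = (2 * k).+1)%N by rewrite mulnS.
rewrite E HP; change (k.+1.-1) with k; split.
  have P1 : P (2 * k)%N.+1 m = 'X^k * Ap m k.+1.
    by rewrite PS HQ HP0 Ap_step; ring.
  rewrite P1; congr (_ * _); rewrite /Ap poly_def; apply: eq_bigr => j _.
  by rewrite Iset_c mul_polyC mulnS.
congr (_ * _); rewrite /Bp poly_def; apply: eq_bigr => j _.
by rewrite Iset_c mul_polyC.
Qed.

Theorem lemma8 (k : nat) (m : (2 * k).+1.-tuple int) : (1 <= k)%N ->
  P (2 * k).-1 m =
    'X^(k.-1) * \sum_(j < k.+1)
       (\sum_(A in Iset (2 * k).-1 (2 * j)) \prod_(i in A) m`_(val i))%:P
         * 'X^j
  /\
  P (2 * k) m =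
    'X^k * \sum_(j < k.+1)
       (\sum_(A in Iset (2 * k) (2 * j).+1) \prod_(i in A) m`_(val i))%:P
         * 'X^j.
Proof. exact: final_aux. Qed.
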